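(* Let $\mathbf{X}=(\mathbf{x}^1,\dots,\mathbf{x}^n)\in\mathbb{R}^{n\times T\times q}$ and $\mathbf{X}'=(\mathbf{x}'^1,\dots,\mathbf{x}'^{n})\in\mathbb{R}^{n\times T'\times q}$ be datasets each composed of $n$ time series, with uniform weights $\mathbf{w}=\mathbf{w}'=(1/n,\dots,1/n)$. Then the MAD problem admits an optimal solution $(\boldsymbol\gamma^\star,\boldsymbol\pi^\star)$ whose transportation plan $\boldsymbol\gamma^\star$ is a one-to-one matching, i.e. $n\boldsymbol\gamma^\star$ is a permutation matrix: each sample of $\mathbf{X}$ is matched to exactly one sample of $\mathbf{X}'$ and conversely. The same holds for the $|\mathcal{C}|$-MAD problem for any labels $\mathbf{Y}\in\mathcal{C}^n$ of $\mathbf{X}$.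
   Context: Here $\mathbf{x}^i_t\in\mathbb{R}^q$ is the $t$-th time step of the $i$-th series. The set of couplings is $\Gamma(\mathbf{w},\mathbf{w}')=\{\boldsymbol\gamma\in\mathbb{R}_{\ge0}^{n\times n}:\boldsymbol\gamma\mathbf{1}=\mathbf{w},\ \boldsymbol\gamma^\top\mathbf{1}=\mathbf{w}'\}$. $\mathcal{A}(T,T')$ is the finite set of admissible DTW alignments. These are binary matrices $\boldsymbol\pi\in\{0,1\}^{T\times T'}$ whose nonzero entries form a path from $(1,1)$ to $(T,T')$ using only steps $(1,0)$, $(0,1)$ or $(1,1)$. The cost tensor is $\mathbf{L}(\mathbf{X},\mathbf{X}')$, with entries $L^{i,j}_{t,t'}=\|\mathbf{x}^i_t-\mathbf{x}'^j_{t'}\|_2^2$. For $\boldsymbol\pi\in\mathbb{R}^{T\times T'}$, $(\mathbf{L}\otimes\boldsymbol\pi)_{ij}=\sum_{t,t'}L^{i,j}_{t,t'}\pi_{tt'}$. The two problems are: - The MAD problem is $\min_{\boldsymbol\gamma\in\Gamma(\mathbf{w},\mathbf{w}'),\ \boldsymbol\pi\in\mathcal{A}(T,T')}\langle\mathbf{L}(\mathbf{X},\mathbf{X}')\otimes\boldsymbol\pi,\boldsymbol\gamma\rangle$, with Frobenius inner product. - Given a finite class set $\mathcal{C}$ and labels $\mathbf{Y}=(y_1,\dots,y_n)\in\mathcal{C}^n$, the $|\mathcal{C}|$-MAD problem is $\min\sum_{i,j}\gamma_{ij}\sum_{t,t'}L^{i,j}_{t,t'}\pi^{(y_i)}_{tt'}$.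 The minimum is over $\boldsymbol\gamma\in\Gamma(\mathbf{w},\mathbf{w}')$ and one alignment $\boldsymbol\pi^{(c)}\in\mathcal{A}(T,T')$ per class $c\in\mathcal{C}$. *)

(* Defs.v *)
From HB Require Import structures.
From mathcomp Require Import all_boot all_order all_fingroup all_algebra.
From mathcomp Require Import reals.
Set Implicit Arguments. Unset Strict Implicit. Unset Printing Implicit Defensive.
Import Order.TTheory GRing.Theory Num.Theory.
Local Open Scope ring_scope.

(* Indices are 0-based: time steps 'I_T, series 'I_n, features 'I_q. *)

Definition Lcost (R : realType) (n T T' q : nat)
  (X : 'I_n -> 'I_T -> 'I_q -> R) (X' : 'I_n -> 'I_T' -> 'I_q -> R)
  (i j : 'I_n) (t : 'I_T) (t' : 'I_T') : R :=
  \sum_(k < q) (X i t k - X' j t' k) ^+ 2.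

Definition dtw_step (a b : nat * nat) : bool :=
  [|| (b.1 == a.1.+1) && (b.2 == a.2),
      (b.1 == a.1) && (b.2 == a.2.+1)
    | (b.1 == a.1.+1) && (b.2 == a.2.+1)].

Definition admissible (R : realType) (T T' : nat) (pi : 'M[R]_(T, T')) : Prop :=
  exists p : seq (nat * nat),
    [/\ path dtw_step (0%N, 0%N) p,
        last (0%N, 0%N) p = (T.-1, T'.-1) &
        forall (t : 'I_T) (t' : 'I_T'),
          pi t t' = if (nat_of_ord t, nat_of_ord t') \in (0%N, 0%N) :: p then 1 else 0].

Definition coupling (R : realType) (n : nat) (w w' : 'I_n -> R) (g : 'M[R]_n) : Prop :=
  [/\ forall i j, 0 <= g i j,
      forall i, \sum_(j < n) g i j = w i &
      forall j, \sum_(i < n) g i j = w' j].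

Definition unif (R : realType) (n : nat) : 'I_n -> R := fun _ => n%:R^-1.

Definition mad_cost (R : realType) (n T T' q : nat)
  (X : 'I_n -> 'I_T -> 'I_q -> R) (X' : 'I_n -> 'I_T' -> 'I_q -> R)
  (g : 'M[R]_n) (pi : 'M[R]_(T, T')) : R :=
  \sum_(i < n) \sum_(j < n)
     g i j * (\sum_(t < T) \sum_(t' < T') Lcost X X' i j t t' * pi t t').

(* |C|-MAD objective: one alignment per class, the one of the label of x^i *)
Definition cmad_cost (R : realType) (n T T' q : nat) (C : finType)
  (X : 'I_n -> 'I_T -> 'I_q -> R) (X' : 'I_n -> 'I_T' -> 'I_q -> R)
  (Y : 'I_n -> C) (g : 'M[R]_n) (Pi : C -> 'M[R]_(T, T')) : R :=
  \sum_(i < n) \sum_(j < n)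
     g i j * (\sum_(t < T) \sum_(t' < T') Lcost X X' i j t t' * Pi (Y i) t t').

(* Main.v *)
Require Import Defs.
From HB Require Import structures.
From mathcomp Require Import all_boot all_order all_fingroup all_algebra.
From mathcomp Require Import reals.
From mathcomp Require Import boolp zify ring lra.
Import Order.TTheory GRing.Theory Num.Theory.
Local Open Scope ring_scope.
Set Implicit Arguments. Unset Strict Implicit. Unset Printing Implicit Defensive.

Local Open Scope nat_scope.
Section Hall.
Variables (I J : finType) (r : I -> J -> bool) (j0 : J).

Definition nbh (J0 : {set J}) (B : {set I}) : {set J} :=
  [set j in J0 | [exists i in B, r i j]].

Lemma nbhU J0 B C : nbh J0 (B :|: C) = nbh J0 B :|: nbh J0 C.
Proof.
apply/setP=> j; rewrite !inE.
case: (j \in J0) => //=.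
apply/existsP/orP.
- case=> i /andP[]; rewrite inE => /orP[] iB rij.
    by left; apply/existsP; exists i; rewrite iB.
  by right; apply/existsP; exists i; rewrite iB.
- case=> /existsP[i /andP[iB rij]]; exists i.
    by rewrite inE iB rij.
  by rewrite inE iB orbT rij.
Qed.

Lemma nbhD J0 K B : nbh (J0 :\: K) B = nbh J0 B :\: K.
Proof. by apply/setP=> j; rewrite !inE; case: (j \in K); rewrite ?andbF. Qed.

Lemma nbh_sub J0 B : nbh J0 B \subset J0.
Proof. by apply/subsetP=> j; rewrite inE => /andP[]. Qed.

Lemma nbhS J0 (B C : {set I}) : B \subset C -> nbh J0 B \subset nbh J0 C.
Proof.
move=> /subsetP BC; apply/subsetP=> j; rewrite !inE => /andP[-> /existsP[i /andP[iB rij]]].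
by apply/existsP; exists i; rewrite BC.
Qed.

Lemma hall : forall (A : {set I}) (J0 : {set J}),
  (forall B : {set I}, B \subset A -> #|B| <= #|nbh J0 B|) ->
  exists f : I -> J, {in A &, injective f} /\
     (forall x, x \in A -> f x \in J0 /\ r x (f x)).
Proof.
move=> A; move: {2}#|A| (leqnn #|A|) => m; elim: m A => [|m IH] A hA J0 hH.
  have -> : A = set0 by apply/eqP; rewrite -cards_eq0; lia.
  by exists (fun _ => j0); split=> [x y|x]; rewrite inE.
case: (boolP [exists B : {set I}, [&& B \subset A, B != set0, B != A &
                 #|nbh J0 B| == #|B|]]).
- case/existsP=> B /and4P[BA Bn0 BnA /eqP cNB].
  have ltBA : #|B| < #|A| by apply: proper_card; rewrite properEneq BnA.
  have [f1 [inj1 h1]] : exists f : I -> J, {in B &, injective f} /\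
     (forall x, x \in B -> f x \in J0 /\ r x (f x)).
    apply: (IH B); first lia.
    by move=> C CB; apply: hH; apply: subset_trans CB BA.
  set NB := nbh J0 B.
  have [f2 [inj2 h2]] : exists f : I -> J, {in A :\: B &, injective f} /\
     (forall x, x \in A :\: B -> f x \in J0 :\: NB /\ r x (f x)).
    apply: (IH (A :\: B)).
      rewrite cardsDS //; have : 0 < #|B| by rewrite card_gt0. lia.
    move=> C CAB; rewrite nbhD.
    have h := hH (C :|: B).
    have CBA : C :|: B \subset A.
      by rewrite subUset BA andbT; apply: subset_trans CAB (subsetDl _ _).
    move: (h CBA); rewrite nbhU -/NB.
    have -> : #|C :|: B| = #|C| + #|B|.
      rewrite cardsU; have -> : C :&: B = set0.
        apply/setP=> x; rewrite !inE; case xB: (x \in B); rewrite ?andbF //.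
        rewrite andbT; apply/negbTE; apply/negP=> xC; move/subsetP: CAB => /(_ x xC);
           by rewrite inE xB.
      by rewrite cards0 subn0.
    have -> : #|nbh J0 C :|: NB| = #|nbh J0 C :\: NB| + #|NB|.
      rewrite -(cardsID NB (nbh J0 C :|: NB)).
      have -> : (nbh J0 C :|: NB) :&: NB = NB.
        by apply/setP=> x; rewrite in_setI in_setU; case: (x \in NB); rewrite ?andbT ?orbT ?andbF.
      have -> : (nbh J0 C :|: NB) :\: NB = nbh J0 C :\: NB.
        by apply/setP=> x; rewrite !in_setD in_setU; case: (x \in NB); rewrite ?orbF.
      lia.
    rewrite /NB cNB. lia.
  exists (fun x => if x \in B then f1 x else f2 x); split.
  + move=> x y xA yA /=.
    case xB: (x \in B); case yB: (y \in B).
    * exact: inj1.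
    * move=> e; have := (h2 y); rewrite inE yB yA => /(_ isT) [].
      rewrite -e in_setD => /andP[/negP nb _] _; exfalso; apply: nb.
      have [hx rx] := h1 x xB.
      by rewrite inE hx; apply/existsP; exists x; rewrite xB.
    * move=> e; have := (h2 x); rewrite inE xB xA => /(_ isT) [].
      rewrite e in_setD => /andP[/negP nb _] _; exfalso; apply: nb.
      have [hy ry] := h1 y yB.
      by rewrite inE hy; apply/existsP; exists y; rewrite yB.
    * by apply: inj2; rewrite inE ?xB ?yB.
  + move=> x xA; case xB: (x \in B); first exact: h1.
    have [] := h2 x; first by rewrite inE xB.
    by rewrite inE => /andP[_ ->].
- rewrite negb_exists => /forallP tight.
  case: (boolP (A == set0)) => [/eqP A0|An0].
    by exists (fun _ => j0); split=> [x y|x]; rewrite A0 inE.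
  have [a aA] := set0Pn _ An0.
  have := hH [set a]; rewrite sub1set aA cards1 => /(_ isT) /card_gt0P [j].
  rewrite inE => /andP[jJ0 /existsP[i /andP[]]]; rewrite inE => /eqP -> raj.
  have [f' [inj' h']] : exists f : I -> J, {in A :\ a &, injective f} /\
     (forall x, x \in A :\ a -> f x \in J0 :\ j /\ r x (f x)).
    apply: IH.
      by move: hA; rewrite (cardsD1 a A) aA; lia.
    move=> C CAa; rewrite nbhD.
    case: (boolP (C == set0)) => [/eqP ->|Cn0]; first by rewrite cards0.
    have CA : C \subset A by apply: subset_trans CAa (subsetDl _ _).
    have aC : a \notin C.
      by apply/negP=> /(subsetP CAa); rewrite !inE eqxx.
    have CnA : C != A by apply/negP=> /eqP e; move: aC; rewrite e aA.
    have := tight C; rewrite CA Cn0 CnA /= => ne.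
    have := hH C CA; rewrite leq_eqVlt eq_sym (negbTE ne) /= => lt.
    rewrite cardsD.
    have : #|nbh J0 C :&: [set j]| <= 1.
      by rewrite -(cards1 j); apply: subset_leq_card; apply: subsetIr.
    lia.
  exists (fun x => if x == a then j else f' x); split.
  + move=> x y xA yA /=.
    case: (eqVneq x a) => [->|xa]; case: (eqVneq y a) => [->|ya] //.
    * move=> e; have [] := h' y; first by rewrite !inE ya.
      by rewrite -e !inE eqxx.
    * move=> e; have [] := h' x; first by rewrite !inE xa.
      by rewrite e !inE eqxx.
    * by apply: inj'; rewrite !inE ?xa ?ya.
  + move=> x xA; case: (eqVneq x a) => [->|xa]; first by [].
    have [] := h' x; first by rewrite !inE xa.
    by rewrite !inE => /andP[_ ->].
Qed.
End Hall.
Local Open Scope ring_scope.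
Section Bvn.
Variables (R : realFieldType) (n : nat).

Definition cst (A : 'I_n -> 'I_n -> R) (s : 'S_n) := \sum_i A i (s i).

Lemma sum_delta (k : 'I_n) (F : 'I_n -> R) : \sum_j (k == j)%:R * F j = F k.
Proof.
rewrite (bigD1 k) //= eqxx mul1r big1 ?addr0 // => j ne.
by rewrite eq_sym (negbTE ne) mul0r.
Qed.

Lemma sum_delta_perm (s : 'S_n) (j : 'I_n) (x : R) :
  \sum_i (s i == j)%:R * x = x.
Proof.
rewrite (bigD1 (s^-1 j)%g) //= permKV eqxx mul1r big1 ?addr0 // => i ne.
have -> : (s i == j) = false.
  by apply/negbTE/negP => /eqP e; move: ne; rewrite -e permK eqxx.
by rewrite mul0r.
Qed.

Lemma nonneg_sum_ge (F : 'I_n -> R) k : (forall j, 0 <= F j) -> F k <= \sum_j F j.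
Proof.
move=> h; rewrite (bigD1 k) //= lerDl; apply: sumr_ge0 => j _; exact: h.
Qed.

Lemma perm_in_support (D : 'I_n -> 'I_n -> R) (c : R) :
  0 < c -> (forall i j, 0 <= D i j) ->
  (forall i, \sum_j D i j = c) -> (forall j, \sum_i D i j = c) ->
  exists s : 'S_n, forall i, 0 < D i (s i).
Proof.
move=> c0 D0 hr hc.
case: (leqP n 0) => [n0|n0].
  by exists 1%g => i; have := ltn_ord i; lia.
have hH : forall B : {set 'I_n}, B \subset setT ->
    (#|B| <= #|nbh (fun i j => (0 < D i j)%R) setT B|)%N.
  move=> B _.
  set NB := nbh _ _ _.
  have h1 : \sum_(i in B) \sum_j D i j = \sum_(i in B) \sum_(j in NB) D i j.
    apply: eq_bigr => i iB.
    rewrite [LHS](bigID (mem NB)) /= [X in _ + X]big1 ?addr0 // => j jN.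
    apply/eqP; rewrite eq_le D0 andbT leNgt; apply/negP => pos.
    move: jN; rewrite inE /= inE; apply/negP; rewrite negbK.
    by apply/existsP; exists i; rewrite iB.
  have h2 : \sum_(i in B) \sum_(j in NB) D i j <= \sum_(j in NB) \sum_i D i j.
    rewrite exchange_big /=; apply: ler_sum => j _.
    rewrite [X in _ <= X](bigID (mem B)) /= lerDl.
    by apply: sumr_ge0 => i _.
  move: h1 h2; under eq_bigr do rewrite hr.
  under [X in _ <= X -> _]eq_bigr do rewrite hc.
  rewrite !sumr_const => <- h.
  rewrite -(ler_nat R) -(ler_pM2r c0) !mulr_natl; exact: h.
have [f [finj hf]] := @hall _ _ (fun i j => (0 < D i j)%R) (Ordinal n0) setT setT hH.
have inj : injective f by move=> x y; apply: finj; rewrite inE.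
exists (perm inj) => i; rewrite permE.
by have [] := hf i; rewrite ?inE.
Qed.

Definition supp (D : 'I_n -> 'I_n -> R) : {set 'I_n * 'I_n} :=
  [set p | 0 < D p.1 p.2].

Lemma bvn (A : 'I_n -> 'I_n -> R) (s0 : 'S_n) :
  (forall s, cst A s0 <= cst A s) ->
  forall (D : 'I_n -> 'I_n -> R) (c : R),
  (forall i j, 0 <= D i j) ->
  (forall i, \sum_j D i j = c) -> (forall j, \sum_i D i j = c) ->
  c * cst A s0 <= \sum_i \sum_j D i j * A i j.
Proof.
move=> opt D c; move: {2}#|supp D|.+1 (ltnSn #|supp D|) => k.
elim: k D c => [|k IH] D c; first by rewrite ltn0.
move=> hk D0 hr hc.
case: (boolP [exists p : 'I_n * 'I_n, 0 < D p.1 p.2]); last first.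
  rewrite negb_exists => /forallP hz.
  have Dz : forall i j, D i j = 0.
    move=> i j; apply/eqP; rewrite eq_le D0 andbT leNgt.
    exact: (hz (i, j)).
  rewrite big1 ?mulr_sumr; last by move=> i _; rewrite big1 // => j _; rewrite Dz mul0r.
  rewrite big1 // => i _; rewrite -(hr i) big1 ?mul0r // => j _; exact: Dz.
case/existsP => -[i1 j1] /= pos.
have c0 : 0 < c by rewrite -(hr i1); apply: lt_le_trans pos (nonneg_sum_ge _ _).
have [s hs] := perm_in_support c0 D0 hr hc.
pose i0 := [arg min_(i < i1) D i (s i)]%O.
have [i0' _ hmin] : extremum_spec (<=%O) predT (fun i => D i (s i)) i0.
  exact: Order.TotalTheory.arg_minP.
set l := D i0' (s i0') in hmin.
have l0 : 0 < l := hs i0'.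
pose D' := fun i j => D i j - (s i == j)%:R * l.
have D'0 : forall i j, 0 <= D' i j.
  move=> i j; rewrite /D'; case: eqP => [<-|_].
    by rewrite mul1r subr_ge0; apply: hmin.
  by rewrite mul0r subr0.
have hr' : forall i, \sum_j D' i j = c - l.
  by move=> i; rewrite /D' sumrB hr sum_delta.
have hc' : forall j, \sum_i D' i j = c - l.
  by move=> j; rewrite /D' sumrB hc sum_delta_perm.
have sub : supp D' \proper supp D.
  apply/properP; split.
    apply/subsetP => -[i j]; rewrite !inE /= => p; apply: lt_le_trans p _.
    by rewrite /D' lerBlDr lerDl mulr_ge0 // ltW.
  exists (i0', s i0'); rewrite !inE /= ?hs //.
  by rewrite /D' eqxx mul1r subrr ltxx.
have := IH D' (c - l) _ D'0 hr' hc'.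
have -> : \sum_i \sum_j D i j * A i j =
          \sum_i \sum_j D' i j * A i j + l * cst A s.
  rewrite /cst mulr_sumr -big_split /=; apply: eq_bigr => i _.
  have e : \sum_j (s i == j)%:R * l * A i j = l * A i (s i).
    by under eq_bigr do rewrite -mulrA; rewrite sum_delta.
  rewrite -e -big_split /=; apply: eq_bigr => j _; rewrite /D'; ring.
move=> /(_ _) h.
have : (c - l) * cst A s0 <= \sum_i \sum_j D' i j * A i j.
  apply: h; have := proper_card sub; lia.
have := opt s.
rewrite mulrBl => h1 h2.
have h3 : l * cst A s0 <= l * cst A s by rewrite ler_wpM2l // ltW.
lra.
Qed.

End Bvn.

Section Main.
Variable R : realType.

Lemma fin_min (K : finType) (P : K -> Prop) (F : K -> R) :
  (exists k, P k) -> exists k, P k /\ forall k', P k' -> F k <= F k'.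
Proof.
case=> k0 Pk0.
have Pb : (fun k => `[< P k >]) k0 by apply/asboolP.
case: (@Order.TotalTheory.arg_minP _ _ K k0 (fun k => `[< P k >]) F Pb) => k /asboolP Pk hk.
by exists k; split => // k' Pk'; apply: hk; apply/asboolP.
Qed.

Definition costg n (g : 'M[R]_n) (M : 'I_n -> 'I_n -> R) :=
  \sum_i \sum_j g i j * M i j.

Lemma cost_perm n (s : 'S_n) (M : 'I_n -> 'I_n -> R) :
  costg (n%:R^-1 *: perm_mx s) M = n%:R^-1 * cst M s.
Proof.
rewrite /costg /cst mulr_sumr; apply: eq_bigr => i _.
under eq_bigr do rewrite !mxE.
rewrite -(sum_delta (s i) (fun j => n%:R^-1 * M i j)).
by apply: eq_bigr => j _; ring.
Qed.

Lemma coupling_perm n (s : 'S_n) :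
  coupling (@unif R n) (@unif R n) (n%:R^-1 *: perm_mx s).
Proof.
split.
- by move=> i j; rewrite !mxE mulr_ge0 // ?invr_ge0 ?ler0n.
- move=> i; rewrite /unif.
  transitivity (\sum_j (s i == j)%:R * (fun _ => n%:R^-1 : R) j);
    last exact: sum_delta.
  by apply: eq_bigr => j _; rewrite !mxE mulrC.
- move=> j; rewrite /unif.
  transitivity (\sum_i (s i == j)%:R * (n%:R^-1 : R));
    last exact: sum_delta_perm.
  by apply: eq_bigr => i _; rewrite !mxE mulrC.
Qed.

Lemma main_abs n (hn : (0 < n)%N) (K : finType) (P : K -> Prop)
  (M : K -> 'I_n -> 'I_n -> R) :
  (exists k, P k) ->
  exists k (s : 'S_n), P k /\ forall k' (g' : 'M[R]_n), P k' ->
    coupling (@unif R n) (@unif R n) g' ->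
    costg (n%:R^-1 *: perm_mx s) (M k) <= costg g' (M k').
Proof.
case=> k0 Pk0.
have [[k s] [/= Pk hks]] := @fin_min _ (fun p : K * 'S_n => P p.1)
   (fun p => cst (M p.1) p.2) (ex_intro _ (k0, 1%g) Pk0).
exists k, s; split => // k' g' Pk' [g0 gr gc].
pose s0 := [arg min_(s < 1%g) cst (M k') s]%O.
have opt : forall s', cst (M k') s0 <= cst (M k') s'.
  rewrite /s0; case: Order.TotalTheory.arg_minP => // s1 _ h s'; exact: h.
have := bvn opt g0 gr gc.
rewrite cost_perm => h; apply: le_trans h.
rewrite ler_wpM2l ?invr_ge0 ?ler0n //.
exact: (hks (k', s0)).
Qed.

Definition pim T T' (b : 'M[bool]_(T, T')) : 'M[R]_(T, T') :=
  \matrix_(t, t') (b t t')%:R.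

Definition bof T T' (pi : 'M[R]_(T, T')) : 'M[bool]_(T, T') :=
  \matrix_(t, t') (pi t t' == 1).

Lemma adm_pim T T' (pi : 'M[R]_(T, T')) : admissible pi -> pim (bof pi) = pi.
Proof.
case=> p [_ _ h]; apply/matrixP => t t'; rewrite !mxE h.
by case: ifP => _; rewrite ?eqxx // eq_sym oner_eq0.
Qed.

Lemma path_exists (a b : nat) :
  exists p, path dtw_step (0%N, 0%N) p /\ last (0%N, 0%N) p = (a, b).
Proof.
elim: a b => [|a IHa] b.
  elim: b => [|b [p [hp hl]]]; first by exists [::].
  exists (rcons p (0%N, b.+1)); rewrite rcons_path last_rcons hp hl; split => //.
  by rewrite /dtw_step /= !eqxx.
have [p [hp hl]] := IHa b.
exists (rcons p (a.+1, b)); rewrite rcons_path last_rcons hp hl; split => //.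
by rewrite /dtw_step /= !eqxx.
Qed.

Lemma adm_exists T T' : exists b : 'M[bool]_(T, T'), admissible (pim b).
Proof.
have [p [hp hl]] := path_exists T.-1 T'.-1.
exists (\matrix_(t, t') (((t : nat), (t' : nat)) \in (0%N, 0%N) :: p)).
exists p; split => // t t'; rewrite !mxE.
by case: ifP.
Qed.

End Main.

Theorem mainTheorem2 (R : realType) (n T T' q : nat)
  (hn : (0 < n)%N) (hT : (0 < T)%N) (hT' : (0 < T')%N)
  (X : 'I_n -> 'I_T -> 'I_q -> R) (X' : 'I_n -> 'I_T' -> 'I_q -> R) :
  (exists (g : 'M[R]_n) (pi : 'M[R]_(T, T')),
     [/\ coupling (@unif R n) (@unif R n) g,
         admissible pi,
         (exists s : 'S_n, n%:R *: g = perm_mx s) &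
         forall (g' : 'M[R]_n) (pi' : 'M[R]_(T, T')),
           coupling (@unif R n) (@unif R n) g' -> admissible pi' ->
           mad_cost X X' g pi <= mad_cost X X' g' pi'])
  /\
  (forall (C : finType) (Y : 'I_n -> C),
   exists (g : 'M[R]_n) (Pi : C -> 'M[R]_(T, T')),
     [/\ coupling (@unif R n) (@unif R n) g,
         (forall c, admissible (Pi c)),
         (exists s : 'S_n, n%:R *: g = perm_mx s) &
         forall (g' : 'M[R]_n) (Pi' : C -> 'M[R]_(T, T')),
           coupling (@unif R n) (@unif R n) g' -> (forall c, admissible (Pi' c)) ->
           cmad_cost X X' Y g Pi <= cmad_cost X X' Y g' Pi']).
Proof.
split.
- pose M := fun (b : 'M[bool]_(T, T')) (i j : 'I_n) =>
     \sum_(t < T) \sum_(t' < T') Lcost X X' i j t t' * pim R b t t'.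
  have [b [s [Pb hb]]] := @main_abs R n hn _ (fun b => admissible (pim R b)) M
     (@adm_exists R T T').
  exists (n%:R^-1 *: perm_mx s), (pim R b); split => //.
  + exact: coupling_perm.
  + exists s; rewrite scalerA mulfV ?scale1r //.
    by rewrite pnatr_eq0 -lt0n.
  + move=> g' pi' cg' api'.
    have := hb (bof pi') g' _ cg'; rewrite /M adm_pim //.
    by move=> /(_ api') h; exact: h.
- move=> C Y.
  pose M := fun (B : {ffun C -> 'M[bool]_(T, T')}) (i j : 'I_n) =>
     \sum_(t < T) \sum_(t' < T') Lcost X X' i j t t' * pim R (B (Y i)) t t'.
  have [b0 hb0] := @adm_exists R T T'.
  have ex0 : exists B : {ffun C -> 'M[bool]_(T, T')},
      forall c, admissible (pim R (B c)).
    by exists [ffun _ => b0] => c; rewrite ffunE.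
  have [B [s [PB hB]]] := @main_abs R n hn _
     (fun B : {ffun C -> 'M[bool]_(T, T')} => forall c, admissible (pim R (B c)))
     M ex0.
  exists (n%:R^-1 *: perm_mx s), (fun c => pim R (B c)); split => //.
  + exact: coupling_perm.
  + exists s; rewrite scalerA mulfV ?scale1r //.
    by rewrite pnatr_eq0 -lt0n.
  + move=> g' Pi' cg' aPi'.
    have := hB [ffun c => bof (Pi' c)] g' _ cg'.
    have -> : costg g' (M [ffun c => bof (Pi' c)]) = cmad_cost X X' Y g' Pi'.
      rewrite /costg /cmad_cost /M; apply: eq_bigr => i _; apply: eq_bigr => j _.
      by rewrite ffunE adm_pim.
    apply; move=> c; rewrite ffunE adm_pim //.
Qed.
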